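(* Let $L$ be a friendly labeling function, $T$ a tree with root edge, and $v$ an interior vertex of $T$ with incident edges $e_1,\dots,e_c$. Let $$g=\prod_{i=1}^d q_{(l_i^1,\dots,l_i^c)}-\prod_{i=1}^d q_{(m_i^1,\dots,m_i^c)}\in I_{T_v,L}.$$ For each $i=1,\dots,d$ and $j=1,\dots,c$ choose $L_i^j\in{\rm im}(L^{T_{v,e_j}},l_i^j)$ and $M_i^j\in{\rm im}(L^{T_{v,e_j}},m_i^j)$ such that for each $j$ the multisets $\{L_1^j,\dots,L_d^j\}$ and $\{M_1^j,\dots,M_d^j\}$ coincide. Then each $(L_i^1,\dots,L_i^c)$ and $(M_i^1,\dots,M_i^c)$ is a consistent labeling of $T$, and $$g^*=\prod_{i=1}^d q_{(L_i^1,\dots,L_i^c)}-\prod_{i=1}^d q_{(M_i^1,\dots,M_i^c)}$$ lies in $I_{T,L}$.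
   Context: Let $G$ be a finite abelian group written additively, $\mathcal{L}$ a finite set, $L:G\to\mathcal{L}$ a function. A tree with root edge is a finite tree $T$ with a distinguished leaf $\rho$; the edge at $\rho$ is the root edge. Every vertex $v\neq\rho$ has a unique parent edge (first edge on the path from $v$ to $\rho$); other edges at $v$ are child edges. Vertices that are neither $\rho$ nor leaves are interior vertices. $E(T)$ is the edge set. An edge $e'$ is below $e$ if $e$ lies on the path from $\rho$ to $e'$ (so $e$ is below itself). A map $h:E(T)\to G$ is a consistent assignment if for every interior vertex $u$, $h(\text{parent edge of }u)=\sum h(\text{child edges of }u)$. ${\rm im}(L^T)=\{L\circ h: h\text{ consistent}\}$ is the set of consistent labelings. $I_{T,L}$ is the kernel of $\mathbb{C}[q_\lambda:\lambda\in{\rm im}(L^T)]\to\mathbb{C}[a^{(e)}_l:e\in E(T),l\in\mathcal{L}]$, $q_\lambda\mapsto\prod_{e\in E(T)}a^{(e)}_{\lambda(e)}$; the same definitions apply to any tree with root edge. For an edge $e$, $T_{e,-}$ is the tree formed by all edges below $e$, regarded as a tree with root edge $e$ (distinguished leaf = endpoint of $e$ closer to $\rho$); $T_{e,+}$ is the tree formed by $e$ and all edges not below $e$, with the same $\rho$ (the endpoint of $e$ farther from $\rho$ becomes a leaf). For an interior vertex $v$ with incident edges $e_1,\dots,e_c$: $T_v$ is the claw tree consisting of $e_1,\dots,e_c$, regarded as a tree with root edge the parent edge of $v$; $T_{v,e_j}=T_{e_j,+}$ if $e_j$ is the parent edge of $v$ and $T_{v,e_j}=T_{e_j,-}$ otherwise.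 The edge sets of $T_{v,e_1},\dots,T_{v,e_c}$ partition $E(T)$, and $(L^1,\dots,L^c)$ denotes the labeling of $T$ whose restriction to $T_{v,e_j}$ is $L^j$. ${\rm im}(L^{T_{v,e_j}},l)$ is the set of consistent labelings of $T_{v,e_j}$ taking the value $l$ on $e_j$. Labelings of $T_v$ are written $(l^1,\dots,l^c)$ with $l^j$ the value on $e_j$. Friendliness: for $m\ge3$ let $Z_m=\{(g_1,\dots,g_m)\in G^m: g_1+\cdots+g_{m-1}=g_m\}$ and $\widetilde{L}(g_1,\dots,g_m)=(L(g_1),\dots,L(g_m))$; $L$ is $m$-friendly if for every $l\in\widetilde{L}(Z_m)$ and every $i$, the set of $i$-th coordinates of elements of $\widetilde{L}^{-1}(l)$ equals $L^{-1}(l_i)$; $L$ is friendly if it is $m$-friendly for all $m\ge3$. *)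

(* Defs.v *)
From HB Require Import structures.
From mathcomp Require Import all_boot all_order all_algebra all_field.
From mathcomp Require Import mpoly.
Set Implicit Arguments. Unset Strict Implicit. Unset Printing Implicit Defensive.
Import GRing.Theory.
Local Open Scope ring_scope.

(* A tree with root edge, encoded by its edge set and the parent-edge map:
   [tpar e = Some e'] iff e' is the parent edge of the lower endpoint of e
   (i.e. e is a child edge of that vertex); [tpar e = None] iff e is the
   root edge.  Vertices other than the distinguished leaf rho correspond
   bijectively to edges (a vertex <-> its parent edge). *)
Record rtree := RTree { tedge : finType; tpar : tedge -> option tedge }.
Arguments tpar : clear implicits.

Definition is_rtree (T : rtree) : Prop :=
  #|[set e | tpar T e == None]| = 1%N /\
  forall e : tedge T, exists n, iter n (obind (tpar T)) (Some e) = None.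

Definition childb (T : rtree) (e f : tedge T) : bool := tpar T f == Some e.

(* the lower endpoint of e is an interior vertex (it has child edges) *)
Definition interiorb (T : rtree) (e : tedge T) : bool := [exists f, childb e f].

Definition belowb (T : rtree) (e f : tedge T) : bool :=
  [exists n : 'I_#|tedge T|.+1, iter n (obind (tpar T)) (Some f) == Some e].

Definition consistentb (G : zmodType) (T : rtree) (h : {ffun tedge T -> G}) :=
  [forall e, interiorb e ==> (h e == \sum_(f | childb e f) h f)].

Definition imL (G : finZmodType) (Lab : finType) (L : G -> Lab) (T : rtree)
  : {set {ffun tedge T -> Lab}} :=
  [set lam | [exists h : {ffun tedge T -> G},
                consistentb h && (lam == [ffun e => L (h e)])]].

Definition imT (G : finZmodType) (Lab : finType) (L : G -> Lab) (T : rtree) :=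
  {lam : {ffun tedge T -> Lab} | lam \in imL L T}.

(* Polynomial rings C[q_lam : lam in im(L^T)] and C[a^(e)_l], with the
   complex numbers modelled by algC. *)
Definition qring (G : finZmodType) (Lab : finType) (L : G -> Lab) (T : rtree) :=
  {mpoly algC[#|{: imT L T}|]}.
Definition aring (Lab : finType) (T : rtree) :=
  {mpoly algC[#|{: tedge T * Lab}|]}.

Definition qvar (G : finZmodType) (Lab : finType) (L : G -> Lab) (T : rtree)
  (lam : imT L T) : qring L T := 'X_(enum_rank lam).

Definition avar (Lab : finType) (T : rtree) (e : tedge T) (l : Lab) : aring Lab T :=
  'X_(enum_rank (e, l)).

(* the ring map q_lam |-> prod_e a^(e)_{lam(e)} *)
Definition phiT (G : finZmodType) (Lab : finType) (L : G -> Lab) (T : rtree)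
  (p : qring L T) : aring Lab T :=
  comp_mpoly [tuple \prod_(e : tedge T) avar e (val (enum_val i) e)
             | i < #|{: imT L T}|] p.

Definition idealTL (G : finZmodType) (Lab : finType) (L : G -> Lab) (T : rtree)
  : pred (qring L T) := [pred p | phiT p == 0].

Definition subtree (T : rtree) (S : {set tedge T}) : rtree :=
  @RTree {e : tedge T | e \in S}
    (fun x => obind (fun p => insub p) (tpar T (val x))).

Definition Tminus (T : rtree) (e : tedge T) : rtree :=
  subtree [set f | belowb e f].
Definition Tplus (T : rtree) (e : tedge T) : rtree :=
  subtree [set f | (f == e) || ~~ belowb e f].

(* For the interior vertex v whose parent edge is p:
   T_v is the claw of edges incident to v (p and its child edges). *)
Definition Tv (T : rtree) (p : tedge T) : rtree :=
  subtree (p |: [set f | childb p f]).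

Definition Svf (T : rtree) (p : tedge T) (f : tedge (Tv p)) : {set tedge T} :=
  if val f == p then [set g | (g == p) || ~~ belowb p g]
  else [set g | belowb (val f) g].
Definition Tvf (T : rtree) (p : tedge T) (f : tedge (Tv p)) : rtree :=
  subtree (Svf f).

(* Friendliness.  For m = m'.+1, Z_m = {g in G^m | g_1+...+g_{m-1} = g_m}. *)
Definition Zm (G : finZmodType) (m' : nat) : {set {ffun 'I_m'.+1 -> G}} :=
  [set g : {ffun 'I_m'.+1 -> G} | \sum_(i < m'.+1 | i != ord_max) g i == g ord_max].

Definition Ltil (G : finZmodType) (Lab : finType) (L : G -> Lab) (m' : nat)
  (g : {ffun 'I_m'.+1 -> G}) : {ffun 'I_m'.+1 -> Lab} := [ffun i => L (g i)].

Definition mfriendly (G : finZmodType) (Lab : finType) (L : G -> Lab) (m' : nat) : Prop :=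
  forall l, l \in @Ltil G Lab L m' @: Zm G m' ->
  forall i : 'I_m'.+1,
    (fun g : {ffun 'I_m'.+1 -> G} => g i) @: [set g in Zm G m' | Ltil L g == l] = [set x | L x == l i].

(* friendly: m-friendly for all m >= 3, i.e. m' >= 2 *)
Definition friendly (G : finZmodType) (Lab : finType) (L : G -> Lab) : Prop :=
  forall m', (2 <= m')%N -> mfriendly L m'.

Arguments idealTL {G Lab} L T.
Arguments phiT {G Lab} L T p.

(* Main.v *)
Require Import Defs.
From HB Require Import structures.
From mathcomp Require Import all_boot all_order all_algebra all_field.
From mathcomp Require Import mpoly.
Import GRing.Theory.
From mathcomp Require Import zify.
From Stdlib Require Import Lia.

Set Implicit Arguments. Unset Strict Implicit. Unset Printing Implicit Defensive.

Section Tree.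
Variable T : rtree.
Hypothesis hT : is_rtree T.
Local Notation E := (tedge T).
Implicit Types (e f x y z b : E).
Definition up n (e : E) := iter n (obind (tpar T)) (Some e).

Lemma iter_none n : iter n (obind (tpar T)) None = None.
Proof. by elim: n => //= n ->. Qed.

Lemma upD n m e : up (n + m) e = iter n (obind (tpar T)) (up m e).
Proof. by rewrite /up iterD. Qed.

Lemma up_none n m e : up n e = None -> (n <= m)%N -> up m e = None.
Proof.
move=> hn /subnK <-; rewrite upD hn; exact: iter_none.
Qed.

Lemma up1 e : up 1 e = tpar T e. Proof. by []. Qed.

Lemma upS n e : up n.+1 e = obind (tpar T) (up n e).
Proof. by []. Qed.

Lemma no_cycle e n : (0 < n)%N -> up n e <> Some e.
Proof.
move=> n0 he.
have hk : forall k, up (k * n) e = Some e.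
  elim=> [|k IH] //; by rewrite mulSn upD IH.
have [N hN] := hT.2 e.
have := hk N; rewrite (@up_none N (N * n) e hN) //.
by rewrite leq_pmulr.
Qed.

Lemma up_bound e n x : up n e = Some x -> (n < #|E|.+1)%N.
Proof.
move=> hx.
have ex : exists N, up N e == None by have [N hN] := hT.2 e; exists N; rewrite /up hN.
pose N := ex_minn ex.
have hN : up N e = None by rewrite /N; case: ex_minnP => m /eqP.
have hmin : forall j, up j e = None -> (N <= j)%N.
  by move=> j hj; rewrite /N; case: ex_minnP => m _ ->//; rewrite hj.
have hnN : (n < N)%N.
  rewrite ltnNge; apply/negP => hle; by rewrite (up_none hN hle) in hx.
suff : (N <= #|E|)%N by move=> h; rewrite ltnS; exact: ltnW (leq_trans hnN h).
have hsome : forall j, (j < N)%N -> up j e <> None.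
  by move=> j hj hn; have := hmin _ hn; rewrite leqNgt hj.
pose f (i : 'I_N) := odflt e (up i e).
have finj : injective f.
  have key : forall i j : 'I_N, (i < j)%N -> up i e = up j e -> False.
    move=> i j hij heq.
    have hl : (N - j + i < N)%N.
      move: (ltn_ord j) hij; move: (nat_of_ord i) (nat_of_ord j) => a b; lia.
    have := hmin (N - j + i) ; rewrite upD heq -upD subnK ?hN; last exact: ltnW (ltn_ord j).
    by move=> /(_ erefl); rewrite leqNgt hl.
  move=> i j; rewrite /f.
  case hi: (up i e) => [a|]; last by have := hsome i (ltn_ord i).
  case hj: (up j e) => [b|]; last by have := hsome j (ltn_ord j).
  move=> /= hab; subst b.
  case: (ltngtP i j) => hij; last by apply: val_inj.
  - by exfalso; apply: (key i j hij); rewrite hi hj.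
  - by exfalso; apply: (key j i hij); rewrite hi hj.
by have := leq_card f finj; rewrite card_ord.
Qed.

Lemma belowbP e f : reflect (exists n, up n f = Some e) (belowb e f).
Proof.
apply: (iffP existsP) => [[n /eqP hn]|[n hn]]; first by exists n.
by exists (Ordinal (up_bound hn)); apply/eqP.
Qed.

Lemma below_refl e : belowb e e.
Proof. by apply/belowbP; exists 0%N. Qed.

Lemma below_trans x y z : belowb x y -> belowb y z -> belowb x z.
Proof.
move=> /belowbP[n hn] /belowbP[m hm]; apply/belowbP; exists (n + m)%N.
by rewrite upD hm.
Qed.

Lemma child_below e f : childb e f -> belowb e f.
Proof. by move=> /eqP h; apply/belowbP; exists 1%N; rewrite up1 h. Qed.

Lemma child_neq x b : childb x b -> b != x.
Proof.
move=> /eqP h; apply/negP => /eqP hb; subst b.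
by apply: (@no_cycle x 1).
Qed.

Lemma child_not_below x b : childb x b -> ~~ belowb b x.
Proof.
move=> /eqP h; apply/negP => /belowbP [n hn].
by apply: (@no_cycle x n.+1) => //; rewrite upS hn /= h.
Qed.

Lemma below_child_step x e f : childb e f -> belowb x f -> f != x -> belowb x e.
Proof.
move=> /eqP hc /belowbP [[|n] hn] hne.
  by move: hn => [hn]; rewrite hn eqxx in hne.
apply/belowbP; exists n; move: hn; rewrite -addn1 upD up1 hc.
by [].
Qed.

Lemma below_split x e : belowb x e -> e != x -> exists2 b, childb x b & belowb b e.
Proof.
move=> /belowbP [[|n] hn] hne.
  by move: hn => [hn]; rewrite hn eqxx in hne.
move: hn; rewrite upS; case hb: (up n e) => [b|] //= hp.
exists b; first by apply/eqP.
by apply/belowbP; exists n.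
Qed.

Lemma child_uniq x b (b' : E) e : childb x b -> childb x b' -> belowb b e -> belowb b' e -> b = b'.
Proof.
move=> /eqP hb /eqP hb' /belowbP[n hn] /belowbP[n' hn'].
have e1 : up n.+1 e = Some x by rewrite upS hn /= hb.
have e2 : up n'.+1 e = Some x by rewrite upS hn' /= hb'.
have gen : forall i j, (i < j)%N -> up i.+1 e = Some x -> up j.+1 e = Some x -> False.
  move=> i j hij h1 h2; apply: (@no_cycle x (j - i)); first by rewrite subn_gt0.
  have : up ((j - i) + i.+1) e = Some x by rewrite addnS subnK // ltnW.
  by rewrite upD h1.
case: (ltngtP n n') => h.
- by exfalso; exact: gen h e1 e2.
- by exfalso; exact: gen h e2 e1.
- by subst n'; move: hn; rewrite hn' => -[].
Qed.
End Tree.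

Section Fr.
Variables (G : finZmodType) (Lab : finType) (L : G -> Lab).
Hypothesis fr : friendly L.

Lemma sum_notmax n (w : 'I_n.+1 -> G) :
  (\sum_(i < n.+1 | i != ord_max) w i = \sum_(i < n) w (widen_ord (leqnSn n) i))%R.
Proof.
rewrite big_mkcond big_ord_recr /= eqxx GRing.addr0; apply: eq_bigr => i _.
by rewrite ifT // -val_eqE /= neq_ltn ltn_ord.
Qed.

Lemma friendly_fam (E : finType) (P : pred E) (a : E -> G) (g : G) :
  (0 < #|P|)%N -> L g = L (\sum_(e | P e) a e)%R ->
  exists a' : E -> G, (forall e, P e -> L (a' e) = L (a e)) /\ (\sum_(e | P e) a' e)%R = g.
Proof.
move=> hP hg.
case/card_gt0P: hP => e0 he0.
set s := enum P.
have hs : size s = #|P| by rewrite cardE.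
have sumE : forall F : E -> G, (\sum_(e | P e) F e = \sum_(i < #|P|) F (nth e0 s i))%R.
  move=> F; rewrite -hs -(big_mkord xpredT (fun i => F (nth e0 s i))) -(big_nth e0 xpredT F).
  by rewrite big_enum_cond big_mkcondr /=; apply: eq_bigl.
have hidx : forall e, P e -> (index e s < #|P|)%N.
  by move=> e he; rewrite -hs index_mem mem_enum.
have hnth : forall e, P e -> nth e0 s (index e s) = e.
  by move=> e he; rewrite nth_index // mem_enum.
move: hidx hnth sumE; set n := #|P| => hidx hnth sumE.
case: (leqP n 1) => hn.
  have hn1 : n = 1%N by move: (hidx e0 he0) hn; lia.
  exists (fun _ => g); split; last by rewrite sumE hn1 big_ord1.
  move=> e he; rewrite hg sumE hn1 big_ord1.
  have := hidx e he; rewrite hn1 ltnS leqn0 => /eqP hi.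
  by rewrite -(hnth e he) hi.
have hn2 : (2 <= n)%N by [].
pose v := [ffun i : 'I_n.+1 => if (i < n)%N then a (nth e0 s i) else (\sum_(e | P e) a e)%R].
have vZ : v \in Zm G n.
  rewrite inE sum_notmax; apply/eqP; rewrite [in RHS]ffunE ltnn sumE.
  by apply: eq_bigr => i _; rewrite ffunE /= ltn_ord.
have := fr hn2 (imset_f (@Ltil G Lab L n) vZ) ord_max.
move=> /setP /(_ g); rewrite inE /Ltil ffunE ffunE ltnn -hg eqxx.
case/imsetP => w; rewrite inE => /andP[wZ /eqP wl] ->.
exists (fun e => w (inord (index e s))); split.
  move=> e he.
  have := congr1 (fun f : {ffun 'I_n.+1 -> Lab} => f (inord (index e s))) wl; rewrite !ffunE /= => ->.
  by rewrite inordK ?(hidx e he) // ?hnth // ltnS ltnW // hidx.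
move: wZ; rewrite inE sum_notmax => /eqP <-.
rewrite sumE; apply: eq_bigr => i _; congr (w _); apply: val_inj.
by rewrite /= index_uniq ?enum_uniq // ?inordK // ?hs // ltnS ltnW.
Qed.
End Fr.

Section Down.
Variables (G : finZmodType) (Lab : finType) (L : G -> Lab).
Hypothesis fr : friendly L.
Variable T : rtree.
Hypothesis hT : is_rtree T.
Local Notation E := (tedge T).
Implicit Types (e f x b : E).

Definition consb (x : E) (h : E -> G) := forall e, belowb x e -> interiorb e ->
  h e = (\sum_(f | childb e f) h f)%R.

Lemma pick_child x b e : childb x b -> belowb b e ->
  [pick b' | childb x b' && belowb b' e] = Some b.
Proof.
move=> hb hbe; case: pickP => [b' /andP[hb' hb'e]|/(_ b)]; last by rewrite hb hbe.
by rewrite (child_uniq hT hb' hb hb'e hbe).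
Qed.

Lemma down_gen n : forall x (h : {ffun E -> G}) g,
  (#|[set e | belowb x e]| < n)%N -> consb x h -> L g = L (h x) ->
  exists h' : {ffun E -> G}, [/\ consb x h', (forall e, belowb x e -> L (h' e) = L (h e)) & h' x = g].
Proof.
elim: n => // n IH x h g hn hc hg.
case: (boolP (interiorb x)) => hint; last first.
  exists [ffun e => if e == x then g else h e]; split.
  - move=> e hxe hie; case: (eqVneq e x) => [exe|nex].
      by subst e; rewrite hie in hint.
    by have [b hb _] := below_split hT hxe nex; case/negP: hint; apply/existsP; exists b.
  - by move=> e _; rewrite ffunE; case: eqP => // ->.
  - by rewrite ffunE eqxx.
have hx := hc x (below_refl hT x) hint.
have hP : (0 < #|childb x|)%N.
  by case/existsP: hint => b hb; apply/card_gt0P; exists b.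
have [a' [ha'1 ha'2]] := friendly_fam fr hP (etrans hg (congr1 L hx)).
have hex : forall b, exists hb : {ffun E -> G}, childb x b ->
   [/\ consb b hb, (forall e, belowb b e -> L (hb e) = L (h e)) & hb b = a' b].
  move=> b; case: (boolP (childb x b)) => hb; last by exists h.
  have hsub : [set e | belowb b e] \proper [set e | belowb x e].
    apply/properP; split.
      apply/subsetP => e; rewrite !inE => hbe. have := child_below hT hb. move=> hh. exact: (below_trans hT hh hbe).
    by exists x; rewrite !inE ?(below_refl hT) // (negPf (child_not_below hT hb)).
  have hlt : (#|[set e | belowb b e]| < n)%N.
    by apply: leq_trans (proper_card hsub) _.
  have hcb : consb b h.
    have hh := child_below hT hb. move=> e hbe hie; apply: (hc e _ hie); exact: (below_trans hT hh hbe).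
  have [hb' [h1 h2 h3]] := IH b h (a' b) hlt hcb (ha'1 b hb).
  by exists hb'.
have [H hH] := fin_all_exists hex.
pose h' := [ffun e => if e == x then g else
   if [pick b | childb x b && belowb b e] is Some b then H b e else h e].
have h'b : forall b e, childb x b -> belowb b e -> h' e = H b e.
  move=> b e hb hbe; rewrite ffunE.
  case: eqP => [exe|_]; last by rewrite (pick_child hb hbe).
  by subst e; have := child_not_below hT hb; rewrite hbe.
exists h'; split.
- move=> e hxe hie; case: (eqVneq e x) => [exe|nex].
    subst e; rewrite ffunE eqxx -ha'2; apply: eq_bigr => b hb.
    have [hb1 _ hb3] := hH b hb.
    by rewrite (h'b b b hb (below_refl hT b)) hb3.
  have [b hb hbe] := below_split hT hxe nex.
  have [hb1 _ _] := hH b hb.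
  rewrite (h'b b e hb hbe) (hb1 e hbe hie); apply: eq_bigr => f hf.
  by rewrite (h'b b f hb (below_trans hT hbe (child_below hT hf))).
- move=> e hxe; case: (eqVneq e x) => [->|nex]; first by rewrite ffunE eqxx.
  have [b hb hbe] := below_split hT hxe nex.
  have [_ hb2 _] := hH b hb.
  by rewrite (h'b b e hb hbe) hb2.
- by rewrite ffunE eqxx.
Qed.

Lemma down x (h : {ffun E -> G}) g : consb x h -> L g = L (h x) ->
  exists h' : {ffun E -> G}, [/\ consb x h', (forall e, belowb x e -> L (h' e) = L (h e)) & h' x = g].
Proof. exact: (@down_gen #|[set e | belowb x e]|.+1). Qed.
End Down.

Section Sub.
Variables (G : finZmodType).
Variable T : rtree.
Local Notation E := (tedge T).

Lemma childb_sub (S : {set E}) (x y : tedge (subtree S)) :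
  childb x y = childb (val x) (val y).
Proof.
rewrite /childb /=; case: (tpar T (val y)) => [z|] //=.
case: insubP => [u hu <-|hnz] /=.
  by apply/eqP/eqP => [[->]|[/val_inj ->]].
apply/esym/eqP => -[hz]; subst z; by rewrite (valP x) in hnz.
Qed.

Definition subH (S : {set E}) (hs : {ffun {x : E | x \in S} -> G}) (e : E) : G :=
  if insub e is Some y then hs y else 0%R.

Lemma subH_val (S : {set E}) (hs : {ffun {x : E | x \in S} -> G}) (x : {x : E | x \in S}) :
  subH hs (val x) = hs x.
Proof. by rewrite /subH valK. Qed.

Lemma sub_cons (S : {set E}) (hs : {ffun tedge (subtree S) -> G}) e :
  consistentb hs -> e \in S -> (forall f, childb e f -> f \in S) -> interiorb e ->
  subH hs e = (\sum_(f | childb e f) subH hs f)%R.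
Proof.
move=> hc heS hch hie.
pose y : tedge (subtree S) := Sub e heS.
have hiy : interiorb y.
  case/existsP: hie => f hf; apply/existsP; exists (Sub f (hch f hf)).
  by rewrite childb_sub.
have := (forallP hc) y; rewrite hiy /= => /eqP hy.
rewrite /subH insubT /= -/y hy.
rewrite (eq_bigl (fun f => (f \in S) && childb e f)); last first.
  by move=> f; case hf: (childb e f); rewrite ?andbF // hch.
rewrite big_sub_cond; apply: eq_big => [z|z _].
  by rewrite childb_sub.
by rewrite valK.
Qed.
End Sub.

Section Glue.
Variables (G : finZmodType) (Lab : finType) (L : G -> Lab).
Hypothesis fr : friendly L.
Variable T : rtree.
Hypothesis hT : is_rtree T.
Local Notation E := (tedge T).
Variable p : E.
Hypothesis hint : interiorb p.

Local Notation Vset := (p |: [set f | childb p f]).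

Lemma mem_Tv (f : tedge (Tv p)) : val f = p \/ childb p (val f).
Proof. by have := valP f; rewrite !inE => /orP[/eqP|]; [left|right]. Qed.

Lemma Svf_p (f : tedge (Tv p)) : val f = p -> Svf f = [set g | (g == p) || ~~ belowb p g].
Proof. by move=> hv; rewrite /Svf hv eqxx. Qed.

Lemma Svf_c (f : tedge (Tv p)) : val f != p -> Svf f = [set g | belowb (val f) g].
Proof. by move=> hv; rewrite /Svf (negPf hv). Qed.

Lemma notSp c e : childb p c -> belowb c e -> e \notin [set g | (g == p) || ~~ belowb p g].
Proof.
move=> hc hce; rewrite inE negb_or negbK.
rewrite (below_trans hT (child_below hT hc) hce) andbT.
apply/eqP => ep; subst e; by have := child_not_below hT hc; rewrite hce.
Qed.

Lemma glue (l0 : imT L (Tv p)) (LL0 : forall f : tedge (Tv p), imT L (Tvf f)) :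
  (forall f (x : tedge (Tvf f)), val x = val f -> val (LL0 f) x = val l0 f) ->
  exists Lg : imT L T, forall f (x : tedge (Tvf f)), val Lg (val x) = val (LL0 f) x.
Proof.
move=> hLL.
have hex : forall f : tedge (Tv p), exists hs : {ffun tedge (Tvf f) -> G},
    consistentb hs /\ val (LL0 f) = [ffun e => L (hs e)].
  move=> f; have := valP (LL0 f); rewrite inE => /existsP [hs /andP[h1 /eqP h2]].
  by exists hs.
have [HS hHS] := fin_all_exists hex.
pose Hf (f : tedge (Tv p)) (e : E) : G := subH (HS f) e.
have Hf_val : forall f (x : tedge (Tvf f)), L (Hf f (val x)) = val (LL0 f) x.
  by move=> f x; rewrite /Hf subH_val (hHS f).2 ffunE.
have hpV : p \in Vset by rewrite setU11.
pose pT : tedge (Tv p) := Sub p hpV.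
have SpT : Svf pT = [set g | (g == p) || ~~ belowb p g] by apply: Svf_p.
have [k hk hkl] : exists2 k : {ffun tedge (Tv p) -> G}, consistentb k & val l0 = [ffun e => L (k e)].
  by have := valP l0; rewrite inE => /existsP [k /andP[h1 /eqP h2]]; exists k.
pose K (e : E) : G := subH k e.
have hK : K p = (\sum_(c | childb p c) K c)%R.
  apply: sub_cons => //.
  by move=> f hf; rewrite !inE hf orbT.
pose t := Hf pT p.
have hpS : p \in Svf pT by rewrite SpT inE eqxx.
have ht : L t = L (K p).
  have := Hf_val pT (Sub p hpS); rewrite /= => ->.
  rewrite hLL //= /K -[p]/(val pT) subH_val hkl ffunE //.
have hP : (0 < #|childb p|)%N.
  by case/existsP: hint => b hb; apply/card_gt0P; exists b.
have [a' [ha'1 ha'2]] := friendly_fam fr hP (etrans ht (congr1 L hK)).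
have hexc : forall c : E, exists Hc : {ffun E -> G}, childb p c ->
   forall f : tedge (Tv p), val f = c ->
   [/\ consb c Hc, (forall e, belowb c e -> L (Hc e) = L (Hf f e)) & Hc c = a' c].
  move=> c; case: (boolP (childb p c)) => hc; last by exists [ffun=> 0%R].
  have hcV : c \in Vset by rewrite !inE hc orbT.
  pose f0 : tedge (Tv p) := Sub c hcV.
  have hcp := child_neq hT hc.
  have hf0 : val f0 != p by [].
  have Sf0 : Svf f0 = [set g | belowb c g] := Svf_c hf0.
  have hcons : consb c [ffun e => Hf f0 e].
    move=> e hce hie; rewrite ffunE; under eq_bigr do rewrite ffunE.
    apply: sub_cons (hHS f0).1 _ _ hie.
      by rewrite Sf0 inE.
    by move=> f hf; rewrite Sf0 inE; exact: (below_trans hT hce (child_below hT hf)).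
  have hcS : c \in Svf f0 by rewrite Sf0 inE below_refl.
  have hl : L (a' c) = L ([ffun e => Hf f0 e] c).
    rewrite ha'1 // ffunE /K -[c]/(val f0) subH_val.
    have := congr1 (fun F : {ffun _ -> Lab} => F f0) hkl; rewrite ffunE /= => <-.
    by rewrite -(hLL f0 (Sub c hcS)) // -Hf_val.
  have [Hc [h1 h2 h3]] := down fr hT hcons hl.
  exists Hc => _ f hf; have -> : f = f0 by apply: val_inj.
  by split => // e hce; rewrite h2 // ffunE.
have [HC hHC] := fin_all_exists hexc.
pose h := [ffun e => if e \in Svf pT then Hf pT e else
   if [pick c | childb p c && belowb c e] is Some c then HC c e else 0%R].
have hnot : forall c e, childb p c -> belowb c e -> h e = HC c e.
  move=> c e hc hce; rewrite ffunE SpT (negPf (notSp hc hce)).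
  by rewrite (pick_child hT hc hce).
have hin : forall e, e \in Svf pT -> h e = Hf pT e.
  by move=> e he; rewrite ffunE he.
have hcV : forall c, childb p c -> c \in Vset.
  by move=> c hc; rewrite !inE hc orbT.
have hcons : consistentb h.
  apply/forallP => e; apply/implyP => hie; apply/eqP.
  case: (boolP (e \in Svf pT)) => heS.
    rewrite hin //; case: (eqVneq e p) => [ep|nep].
      subst e; rewrite -/t -ha'2; apply: eq_bigr => c hc.
      have [_ _ h3] := hHC c hc (Sub c (hcV c hc)) erefl.
      by rewrite (hnot c c hc (below_refl hT c)) h3.
    have heS' : ~~ belowb p e by move: heS; rewrite SpT inE (negPf nep).
    have hch : forall f, childb e f -> f \in Svf pT.
      move=> f hf; rewrite SpT inE; case: (eqVneq f p) => //= fnp.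
      apply/negP => hpf; have := below_child_step hT hf hpf fnp.
      by rewrite (negPf heS').
    rewrite /Hf (sub_cons (hHS pT).1 heS hch hie); apply: eq_bigr => f hf.
    by rewrite hin // hch.
  have nep : e != p by apply/eqP => ep; rewrite ep hpS in heS.
  have hpe : belowb p e by move: heS; rewrite SpT inE negb_or negbK => /andP[].
  have [c hc hce] := below_split hT hpe nep.
  have [h1 _ _] := hHC c hc (Sub c (hcV c hc)) erefl.
  rewrite (hnot c e hc hce) (h1 e hce hie); apply: eq_bigr => f hf.
  by rewrite (hnot c f hc (below_trans hT hce (child_below hT hf))).
have hLg : [ffun e => L (h e)] \in imL L T.
  by rewrite inE; apply/existsP; exists h; rewrite hcons eqxx.
exists (exist (fun lam => lam \in imL L T) _ hLg) => f.
case: (mem_Tv f) => hf.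
  have -> : f = pT by apply: val_inj.
  move=> x; rewrite /= ffunE hin ?Hf_val //; exact: (valP x).
move=> x; rewrite /= ffunE.
have hfp : val f != p by exact: (child_neq hT hf).
have hxc : belowb (val f) (val x).
  have := valP x; move: (val x) => y; by rewrite /= Svf_c // inE.
rewrite (hnot _ _ hf hxc).
have [_ h2 _] := hHC (val f) hf f erefl.
by rewrite h2 ?below_refl // Hf_val.
Qed.
End Glue.

Unset Implicit Arguments.
Local Open Scope ring_scope.

Theorem lemma4p7 (G : finZmodType) (Lab : finType) (L : G -> Lab)
  (T : rtree) (p : tedge T) (d : nat)
  (l m : 'I_d -> imT L (Tv p))
  (LL MM : 'I_d -> forall f : tedge (Tv p), imT L (Tvf f)) :
  is_rtree T -> friendly L -> interiorb p ->
  (\prod_(i < d) qvar (l i) - \prod_(i < d) qvar (m i)) \in idealTL L (Tv p) ->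
  (forall i f (x : tedge (Tvf f)), val x = val f -> val (LL i f) x = val (l i) f) ->
  (forall i f (x : tedge (Tvf f)), val x = val f -> val (MM i f) x = val (m i) f) ->
  (forall f : tedge (Tv p),
     perm_eq [seq val (LL i f) | i <- enum 'I_d] [seq val (MM i f) | i <- enum 'I_d]) ->
  exists Lg Mg : 'I_d -> imT L T,
    (forall i f (x : tedge (Tvf f)), val (Lg i) (val x) = val (LL i f) x) /\
    (forall i f (x : tedge (Tvf f)), val (Mg i) (val x) = val (MM i f) x) /\
    (\prod_(i < d) qvar (Lg i) - \prod_(i < d) qvar (Mg i)) \in idealTL L T.
Proof.
move=> hT fr hint _ hLl hMm hperm.
have [Lg hLg] := fin_all_exists (fun i => glue fr hT hint (hLl i)).
have [Mg hMg] := fin_all_exists (fun i => glue fr hT hint (hMm i)).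
exists Lg, Mg; split => //; split => //.
have phiq : forall lam : imT L T, phiT L T (qvar lam) = \prod_e avar e (val lam e).
  move=> lam; rewrite /phiT /qvar comp_mpolyXU -tnth_nth tnth_mktuple.
  by rewrite enum_rankK.
rewrite inE /= /phiT rmorphB !rmorph_prod /= -/(phiT L T) subr_eq0.
rewrite (eq_bigr _ (fun i _ => phiq (Lg i))) (eq_bigr _ (fun i _ => phiq (Mg i))).
rewrite exchange_big [X in _ == X]exchange_big /=; apply/eqP/eq_bigr => e _.
have [f hf] : exists f : tedge (Tv p), e \in Svf f.
  have hpV : p \in p |: [set f | childb p f] by rewrite setU11.
  case: (boolP (belowb p e)) => hpe; last first.
    by exists (Sub p hpV); rewrite /Svf /= eqxx inE hpe orbT.
  case: (eqVneq e p) => [->|nep].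
    by exists (Sub p hpV); rewrite /Svf /= eqxx inE eqxx.
  have [c hc hce] := below_split hT hpe nep.
  have hcV : c \in p |: [set f | childb p f] by rewrite !inE hc orbT.
  by exists (Sub c hcV); rewrite /Svf /= (negPf (child_neq hT hc)) inE.
pose x : tedge (Tvf f) := Sub e hf.
have -> : \prod_(i < d) avar e (val (Lg i) e) = \prod_(i < d) avar e (val (LL i f) x).
  by apply: eq_bigr => i _; rewrite -(hLg i f x).
have -> : \prod_(i < d) avar e (val (Mg i) e) = \prod_(i < d) avar e (val (MM i f) x).
  by apply: eq_bigr => i _; rewrite -(hMg i f x).
rewrite -!big_enum /=.
rewrite -(big_map (fun i => val (LL i f)) xpredT (fun lam => avar e (lam x))).
rewrite -(big_map (fun i => val (MM i f)) xpredT (fun lam => avar e (lam x))).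
rewrite -(big_map (fun lam : {ffun _ -> Lab} => lam x) xpredT (fun y => avar e y)).
rewrite -[RHS](big_map (fun lam : {ffun _ -> Lab} => lam x) xpredT (fun y => avar e y)).
by apply: perm_big; apply: perm_map.
Qed.
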